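(* Let $r\ge1$, let $\mathbf{a}=\langle a_1,\dots,a_s\rangle$ be an integer vector with $s\le r+1$, and let $\mathbf{b}=\langle b_1\rangle$ with $b_1=a_1+\cdots+a_s$. Put $\delta=a_1\varepsilon_1+\cdots+a_s\varepsilon_s-b_1\varepsilon_{r+1}\in\mathbb{Z}^{r+1}$. Then the map sending a juggling sequence $S\in\mathrm{JS}(\mathbf{a},\mathbf{b},r)$ to the multiset of positive roots $\{\varepsilon_i-\varepsilon_{i+j}\}$, with $\varepsilon_i-\varepsilon_{i+j}$ taken with multiplicity equal to the number of throws at time $i$ to height $j$ in $S$, is a bijection from $\mathrm{JS}(\mathbf{a},\mathbf{b},r)$ onto $P_{A_r}(\delta)$.
   Context: A (magic) juggling state is a finitely supported integer vector $\mathbf{s}=\langle s_1,s_2,\dots\rangle$ indexed by heights $1,2,\dots$ (trailing zeros omitted). A juggling sequence of length $n$ from $\mathbf{a}$ to $\mathbf{b}$ is a sequence $(\mathbf{s}_0,\dots,\mathbf{s}_n)$ with $\mathbf{s}_0=\mathbf{a}$, $\mathbf{s}_n=\mathbf{b}$, such that for each $1\le i\le n$ there are nonnegative integers $c^{(i)}_1,c^{(i)}_2,\dots$ (finitely many nonzero) with $\sum_k c^{(i)}_k=(\mathbf{s}_{i-1})_1$ and $(\mathbf{s}_i)_k=(\mathbf{s}_{i-1})_{k+1}+c^{(i)}_k$ for all $k\ge1$; $c^{(i)}_j$ is the number of throws at time $i$ to height $j$. $\mathrm{JS}(\mathbf{a},\mathbf{b},n)$ denotes the set of these (no hand capacity constraint).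 For $r\ge1$, $\varepsilon_1,\dots,\varepsilon_{r+1}$ is the standard basis of $\mathbb{R}^{r+1}$ and $\Phi^+_{A_r}=\{\varepsilon_i-\varepsilon_j:1\le i<j\le r+1\}$. For $\mu\in\mathbb{Z}^{r+1}$ and $\Lambda\subseteq\Phi^+_{A_r}$, $P_\Lambda(\mu)$ is the set of finite multisets of elements of $\Lambda$ whose sum is $\mu$ (the empty multiset is a partition of $0$), $K_\Lambda(\mu)=|P_\Lambda(\mu)|$; for $\Lambda=\Phi^+_{A_r}$ we write $P_{A_r}$ and $K_{A_r}$ (Kostant's partition function). *)

(* Defs.v *)
From HB Require Import structures.
From mathcomp Require Import all_boot all_order all_algebra.
Set Implicit Arguments. Unset Strict Implicit. Unset Printing Implicit Defensive.
Import Order.TTheory GRing.Theory Num.Theory.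
Local Open Scope ring_scope.

(* A (magic) juggling state: [s k] is the entry at height [k.+1]
   (heights 1,2,... are stored 0-based). *)
Definition state := nat -> int.

Definition fin_supp (s : state) : Prop := exists N : nat, forall k, (N <= k)%N -> s k = 0.

Definition state_of_seq (a : seq int) : state := fun k => nth 0 a k.

(* one step s -> s' with throw vector c (c k = number of throws to height k.+1) *)
Definition throw_step (s s' : state) (c : nat -> nat) : Prop :=
  (exists N : nat, (forall k, (N <= k)%N -> c k = 0%N) /\
                   \sum_(k < N) (c k)%:Z = s 0%N) /\
  forall k, s' k = s k.+1 + (c k)%:Z.

Definition is_JS (a b : state) (n : nat) (S : seq state) : Prop :=
  size S = n.+1 /\ nth a S 0 = a /\ nth a S n = b /\
  (forall i, (i <= n)%N -> fin_supp (nth a S i)) /\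
  (forall i, (0 < i <= n)%N -> exists c, throw_step (nth a S i.-1) (nth a S i) c).

(* number of throws at time i (1-based) to height j (1-based) in S:
   c^{(i)}_j = (s_i)_j - (s_{i-1})_{j+1}  *)
Definition throws (S : seq state) (i j : nat) : nat :=
  `| nth (fun _ => 0%R : int) S i j.-1 - nth (fun _ => 0%R : int) S i.-1 j |%N.

(* positive roots of A_r: eps_i - eps_j, i < j, with 0-based ordinals of 'I_(r+1) *)
Definition posroot (r : nat) := {p : 'I_r.+1 * 'I_r.+1 | (p.1 < p.2)%N}.

Definition root_vec r (p : posroot r) : 'rV[int]_r.+1 :=
  delta_mx 0 (val p).1 - delta_mx 0 (val p).2.

Definition root_multiset r := {ffun posroot r -> nat}.

Definition kostant_parts r (mu : 'rV[int]_r.+1) : pred (root_multiset r) :=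
  fun m => \sum_(p : posroot r) root_vec p *+ m p == mu.


(* the map: eps_i - eps_{i+j} with multiplicity = throws at time i to height j.
   With 0-based ordinals p = (i-1, i+j-1): time i = p.1 + 1, height j = p.2 - p.1 *)
Definition js_to_roots r (S : seq state) : root_multiset r :=
  [ffun p : posroot r => throws S (val p).1.+1 ((val p).2 - (val p).1)].

Definition delta r (a : seq int) : 'rV[int]_r.+1 :=
  \row_(k < r.+1) (nth 0 a k - (if k == ord_max then \sum_(x <- a) x else 0)).

(* Main.v *)
Require Import Defs.
From HB Require Import structures.
From mathcomp Require Import all_boot all_order all_algebra zify.
From Stdlib Require Import FunctionalExtensionality.
Set Implicit Arguments. Unset Strict Implicit. Unset Printing Implicit Defensive.
Import Order.TTheory GRing.Theory Num.Theory.
Local Open Scope ring_scope.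


Lemma sum_posroot r (G : 'I_r.+1 -> 'I_r.+1 -> int) :
  \sum_(p : posroot r) G (val p).1 (val p).2 =
  \sum_(i < r.+1) \sum_(j < r.+1) (if (i < j)%N then G i j else 0).
Proof.
rewrite pair_big /= -big_mkcond /=.
rewrite (reindex_omap (val : posroot r -> _) insub); last first.
  by move=> x Px; rewrite insubT.
apply: eq_bigl => -[x Px] /=; rewrite insubT /= Px.
by rewrite eqxx.
Qed.

Lemma kostant_iff r (m : root_multiset r) (Mf : nat -> nat -> nat) (mu : 'rV[int]_r.+1) :
  (forall p : posroot r, m p = Mf (val p).1 (val p).2) ->
  (m \in kostant_parts mu) <->
  (forall q : 'I_r.+1, \sum_(j < r.+1) (if (q < j)%N then (Mf q j)%:Z else 0)
     - \sum_(i < r.+1) (if (i < q)%N then (Mf i q)%:Z else 0) = mu 0 q).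
Proof.
move=> hm; rewrite unfold_in /kostant_parts.
have E : forall q : 'I_r.+1, (\sum_(p : posroot r) root_vec p *+ m p) 0 q =
  \sum_(j < r.+1) (if (q < j)%N then (Mf q j)%:Z else 0)
     - \sum_(i < r.+1) (if (i < q)%N then (Mf i q)%:Z else 0).
  move=> q; rewrite summxE.
  under eq_bigr => p _ do rewrite mulmxnE !mxE hm.
  rewrite (sum_posroot (fun i j : 'I_r.+1 => (((0 == 0) && (q == i))%:R - ((0 == 0) && (q == j))%:R : int) *+ Mf i j)) /=.
  have H : forall i j : 'I_r.+1, (if (i < j)%N then ((q == i)%:R - (q == j)%:R : int) *+ Mf i j else 0)
     = (if (i < j)%N then ((q == i)%:R : int) *+ Mf i j else 0) - (if (i < j)%N then ((q == j)%:R : int) *+ Mf i j else 0).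
    by move=> i j; case: ifP; rewrite ?subr0 // mulrnBl.
  under eq_bigr => i _ do (under eq_bigr => j _ do rewrite H; rewrite sumrB).
  rewrite sumrB; congr (_ - _).
    rewrite (bigD1 q) //= [X in _ + X]big1 ?addr0; last first.
      move=> i /negbTE iq; apply: big1 => j _; rewrite eq_sym iq mul0rn; by case: ifP.
    by apply: eq_bigr => j _; rewrite eqxx -natz; case: ifP.
  apply: eq_bigr => i _; rewrite (bigD1 q) //= [X in _ + X]big1 ?addr0; last first.
    move=> j /negbTE jq; rewrite eq_sym jq mul0rn; by case: ifP.
  by rewrite eqxx -natz.
split.
  by move/eqP=> <- q; rewrite -E.
move=> H; apply/eqP/matrixP => i j; rewrite ord1 E; exact: H.
Qed.



Lemma out_eq r q (F : nat -> int) : (q <= r)%N ->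
  \sum_(j < r.+1) (if (q < j)%N then F j else 0) = \sum_(h < r - q) F (q + h.+1)%N.
Proof.
move=> qr; rewrite -(big_mkord xpredT (fun j => if (q < j)%N then F j else 0)).
rewrite (big_cat_nat _ (n:=q.+1)) //= ?ltnS //.
rewrite big_nat_cond big1 ?add0r; last by move=> i /andP[/andP[_ h] _]; rewrite ltnNge -ltnS h.
rewrite -{1}(add0n q.+1) big_addn subSS big_mkord.
apply: eq_bigr => i _; rewrite addnS ltnS leq_addl; by rewrite addnS addnC.
Qed.

Lemma in_eq r q (G : nat -> int) : (q <= r.+1)%N ->
  \sum_(i < r.+1) (if (i < q)%N then G i else 0) = \sum_(i < q) G i.
Proof.
move=> qr; rewrite -(big_mkord xpredT (fun i => if (i < q)%N then G i else 0)).
rewrite (big_cat_nat _ (n:=q)) //= [X in _ + X]big_nat_cond.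
rewrite [X in _ + X]big1 ?addr0; last by move=> i /andP[/andP[h _] _]; rewrite ltnNge h.
rewrite big_mkord; apply: eq_bigr => i _; by rewrite ltn_ord.
Qed.

Lemma widen_sum (f : nat -> int) N L : (forall k, (N <= k)%N -> f k = 0) -> (N <= L)%N ->
  \sum_(k < N) f k = \sum_(k < L) f k.
Proof.
move=> h NL; rewrite -!(big_mkord xpredT) (@big_cat_nat _ _ _ N 0 L _ _ (leq0n N) NL) //=.
rewrite [X in _ + X]big_nat_cond [X in _ + X]big1 ?addr0 //.
by move=> i /andP[/andP[h1 _] _]; apply: h.
Qed.

Lemma trunc_sum (f : nat -> int) N M : (forall k, (N <= k)%N -> f k = 0) ->
  (forall k, (M <= k)%N -> f k = 0) -> \sum_(k < N) f k = \sum_(k < M) f k.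
Proof.
move=> hN hM; rewrite (widen_sum hN (leq_maxl N M)) (widen_sum hM (leq_maxr N M)) //.
Qed.

Definition st (a : seq int) (c : nat -> nat -> nat) (i : nat) : state :=
  fun k => nth 0 a (k + i) + \sum_(t < i) (c t.+1 (k + i - t)%N)%:Z.

Lemma st_step a c i k : (0 < i)%N -> st a c i k = st a c i.-1 k.+1 + (c i k.+1)%:Z.
Proof.
case: i => // i _ /=; rewrite /st big_ord_recr /= addrA; congr (_ + _ + _).
- by rewrite addnS addSn.
- by apply: eq_bigr => t _; rewrite addnS addSn.
- by rewrite addnS subSn ?leq_addl // addnK.
Qed.



Lemma throws_c r (A B : state) S i : is_JS A B r S -> (0 < i <= r)%N ->
  exists c, throw_step (nth A S i.-1) (nth A S i) c /\ forall k, throws S i k.+1 = c k.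
Proof.
move=> [hs [h0 [hr [hf hstep]]]] hi; have [c hc] := hstep i hi.
exists c; split => // k; case: hc => _ hc.
have Hi : (i < size S)%N by rewrite hs ltnS; case/andP: hi.
have Hi1 : (i.-1 < size S)%N by rewrite hs ltnS; case/andP: hi => ? ?; apply: leq_trans (leq_pred _) _.
rewrite /throws /= !(set_nth_default A) // hc; have E : forall x y : int, x + y - x = y by move=> x y; rewrite addrC addKr.
by rewrite E.
Qed.

Lemma fwd_step r (A B : state) S i k : is_JS A B r S -> (0 < i <= r)%N ->
  nth A S i k = nth A S i.-1 k.+1 + (throws S i k.+1)%:Z.
Proof.
move=> hJ hi; have [c [[_ hc] ->]] := throws_c hJ hi; exact: hc.
Qed.

Lemma fwd_sum r (A B : state) S i : is_JS A B r S -> (0 < i <= r)%N ->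
  exists N, (forall k, (N <= k)%N -> throws S i k.+1 = 0%N) /\
    \sum_(k < N) (throws S i k.+1)%:Z = nth A S i.-1 0%N.
Proof.
move=> hJ hi; have [c [[[N [hN hs]] _] hc]] := throws_c hJ hi.
exists N; split; first by move=> k hk; rewrite hc hN.
by rewrite -hs; apply: eq_bigr => k _; rewrite hc.
Qed.

Lemma fwd_form r a (B : state) S i k : is_JS (state_of_seq a) B r S -> (i <= r)%N ->
  nth (state_of_seq a) S i k = st a (throws S) i k.
Proof.
move=> hJ; elim: i k => [|i IH] k hi.
  by case: (hJ) => _ [-> _]; rewrite /st addn0 big_ord0 addr0.
rewrite (fwd_step k hJ) ?hi // (st_step _ _ k (i:=i.+1)) //= IH //; exact: ltnW.
Qed.

Lemma claim1 r a S i j : (size a <= r.+1)%N ->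
  is_JS (state_of_seq a) (state_of_seq [:: \sum_(x <- a) x]) r S ->
  (1 <= i <= r)%N -> (0 < j)%N -> (r.+1 < i + j)%N -> throws S i j = 0%N.
Proof.
move=> ha hJ /andP[i1 ir] j0 hij.
set k := (i + j - r.+1)%N.
have F := fwd_form k hJ (leqnn r).
have hB : nth (state_of_seq a) S r k = 0.
  case: (hJ) => _ [_ [-> _]]; rewrite /state_of_seq nth_default //= /k; lia.
rewrite hB /st nth_default ?add0r in F; last by apply: leq_trans ha _; lia.
have H0 : forall t : 'I_r, xpredT t -> 0 <= (throws S t.+1 (k + r - t))%:Z by [].
have hi' : (i.-1 < r)%N by lia.
have := @psumr_eq0P _ _ _ _ H0 (esym F) (Ordinal hi') isT.
rewrite /= (_ : (k + r - i.-1 = j)%N); last by rewrite /k; lia.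
have -> : i.-1.+1 = i by lia.
by move/eqP; rewrite eqz_nat => /eqP.
Qed.



Lemma fwd_kostant r a S : (size a <= r.+1)%N ->
  is_JS (state_of_seq a) (state_of_seq [:: \sum_(x <- a) x]) r S ->
  js_to_roots r S \in kostant_parts (delta r a).
Proof.
move=> ha hJ.
apply/(kostant_iff (Mf := fun i j => throws S i.+1 (j - i))) => [p|q]; first by rewrite ffunE.
have hq : (q <= r)%N by rewrite -ltnS.
rewrite (out_eq (fun j => (throws S q.+1 (j - q))%:Z) hq) (in_eq (fun i => (throws S i.+1 (q - i))%:Z) (ltnW (ltn_ord q))) mxE.
under eq_bigr => h _ do rewrite addKn.
case: q hq => q hq0 /= hq.
have -> : (Ordinal hq0 == ord_max) = (q == r) by rewrite -val_eqE.
have F := fwd_form 0 hJ hq; rewrite /st add0n in F.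
case: eqP => [eqr|neqr].
  subst q; rewrite subnn big_ord0 add0r.
  case: (hJ) => _ [_ [hB _]]; rewrite hB /state_of_seq /= in F.
  by rewrite F opprD addrA subrr add0r.
have qr : (q < r)%N by rewrite ltn_neqAle hq andbT; apply/eqP.
have [N [hN hsum]] := fwd_sum hJ (i:=q.+1) ltac:(lia).
rewrite (@trunc_sum (fun k => (throws S q.+1 k.+1)%:Z) (r - q) N); last first.
- by move=> k hk; rewrite hN.
- move=> k hk; rewrite (claim1 ha hJ) //; lia.
rewrite hsum /= F; rewrite /state_of_seq.
by rewrite addrK subr0.
Qed.

Lemma js_inj r a S S' : (size a <= r.+1)%N ->
  is_JS (state_of_seq a) (state_of_seq [:: \sum_(x <- a) x]) r S ->
  is_JS (state_of_seq a) (state_of_seq [:: \sum_(x <- a) x]) r S' ->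
  js_to_roots r S = js_to_roots r S' -> S = S'.
Proof.
move=> ha hJ hJ' heq.
have ht : forall t h, (0 < t <= r)%N -> (0 < h)%N -> throws S t h = throws S' t h.
  move=> t h ht h0; case: (leqP (t + h) r.+1) => th; last first.
    by rewrite (claim1 ha hJ) ?(claim1 ha hJ') //; lia.
  have e1 : (t.-1 < r.+1)%N by lia.
  have e2 : (t.-1 + h < r.+1)%N by lia.
  have Pp : ((inord t.-1 : 'I_r.+1) < (inord (t.-1 + h) : 'I_r.+1))%N.
    by rewrite !inordK //; lia.
  have := congr1 (fun f : root_multiset r => f (exist _ (inord t.-1, inord (t.-1 + h)) Pp : posroot r)) heq.
  rewrite !ffunE /= !inordK // addKn.
  by have -> : t.-1.+1 = t by lia.
case: (hJ) => hs _; case: (hJ') => hs' _.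
apply: (@eq_from_nth _ (state_of_seq a)); first by rewrite hs hs'.
move=> i; rewrite hs ltnS => hi.
apply: functional_extensionality => k.
rewrite (fwd_form _ hJ hi) (fwd_form _ hJ' hi) /st; congr (_ + _).
apply: eq_bigr => t _; move: (ltn_ord t) => ?; rewrite ht //; lia.
Qed.



Definition Mm r (m : root_multiset r) (i j : nat) : nat :=
  if (i < j)%N && (j < r.+1)%N then
    (if (insub ((inord i, inord j) : 'I_r.+1 * 'I_r.+1) : option (posroot r)) is Some p
     then m p else 0%N) else 0%N.

Lemma Mm_val r (m : root_multiset r) (p : posroot r) : Mm m (val p).1 (val p).2 = m p.
Proof.
case: p => [[i j] Pij] /=; rewrite /Mm /= Pij ltn_ord /= !inord_val insubT /=.
by congr (m _); apply: val_inj.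
Qed.

Lemma Mm_out r (m : root_multiset r) i j : (r.+1 <= j)%N -> Mm m i j = 0%N.
Proof. by move=> h; rewrite /Mm [(j < r.+1)%N]ltnNge h andbF. Qed.

Definition cm r (m : root_multiset r) (t h : nat) : nat :=
  if (0 < t)%N then Mm m t.-1 (t.-1 + h) else 0%N.

Lemma kost_nat r a (m : root_multiset r) q : m \in kostant_parts (delta r a) -> (q <= r)%N ->
  \sum_(h < r - q) (Mm m q (q + h.+1))%:Z - \sum_(i < q) (Mm m i q)%:Z
   = nth 0 a q - (if q == r then \sum_(x <- a) x else 0).
Proof.
move=> /(@kostant_iff r m (Mm m) (delta r a) (fun p => esym (Mm_val m p))) K hq.
have hq0 : (q < r.+1)%N by [].
have := K (Ordinal hq0).
rewrite (out_eq (fun j => (Mm m q j)%:Z) hq) (in_eq (fun i => (Mm m i q)%:Z) (ltnW hq0)) mxE /=.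
by have -> : (Ordinal hq0 == ord_max) = (q == r) by rewrite -val_eqE.
Qed.

Lemma helpK (x y z : int) : - y = x - z -> x + y = z.
Proof. by move=> h; rewrite -(opprK y) h opprB addrC subrK. Qed.

Lemma surj r a (m : root_multiset r) : (size a <= r.+1)%N ->
  m \in kostant_parts (delta r a) ->
  exists S, is_JS (state_of_seq a) (state_of_seq [:: \sum_(x <- a) x]) r S /\ js_to_roots r S = m.
Proof.
move=> ha hm.
set S := mkseq (fun i => st a (cm m) i) r.+1.
have nthS0 : forall x0 i, (i <= r)%N -> nth x0 S i = st a (cm m) i by move=> x0 i hi; rewrite nth_mkseq.
have sizeS : size S = r.+1 by rewrite size_mkseq.
clearbody S.
have nthS := nthS0.
have throwsS : forall i h, (0 < i <= r)%N -> (0 < h)%N -> throws S i h = cm m i h.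
  move=> i h hi h0; rewrite /throws !nthS; try lia.
  rewrite (st_step _ _ _ (_ : (0 < i)%N)); last by lia.
  have -> : h.-1.+1 = h by lia.
  by rewrite (addrC (st _ _ _ _)) addrK.
exists S; split; last first.
  apply/ffunP => p; rewrite ffunE throwsS; last 2 first.
  - by case: p => [[i j] P] /=; move: (ltn_ord j) P => /= ? ?; lia.
  - by case: p => [[i j] P] /=; move: P => /= ?; lia.
  rewrite /cm /= subnKC ?Mm_val //; case: p => [[i j] P] /=; exact: ltnW.
split; first by [].
split.
  by rewrite nthS //; apply: functional_extensionality => k; rewrite /st addn0 big_ord0 addr0.
split.
  rewrite nthS //; apply: functional_extensionality => k; rewrite /st.
  case: k => [|k].
    have := kost_nat hm (leqnn r); rewrite subnn big_ord0 eqxx add0r => K.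
    rewrite /state_of_seq /= add0n.
    have -> : \sum_(t < r) ((cm m t.+1 (r - t))%:Z) = \sum_(t < r) (Mm m t r)%:Z.
      by apply: eq_bigr => t _; rewrite /cm /= subnKC // ltnW.
    exact: helpK.
  rewrite nth_default; last by apply: leq_trans ha _; rewrite addSn ltnS leq_addl.
  rewrite big1 ?addr0 /state_of_seq /= ?nth_nil ?add0r // => t _.
  by rewrite /cm /= Mm_out //; move: (ltn_ord t) => ?; lia.
split.
  move=> i hi; exists (size a + r.+1)%N => k hk; rewrite nthS // /st nth_default; last exact: leq_trans (leq_trans (leq_addr r.+1 (size a)) hk) (leq_addr i k).
  rewrite big1 ?addr0 // => t _.
  by rewrite /cm /= Mm_out //; move: (ltn_ord t) => ?; lia.
move=> i hi; exists (fun k => cm m i k.+1); split; last first.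
  have i0 : (0 < i)%N by case/andP: hi.
  have ir : (i <= r)%N by case/andP: hi.
  move=> k; rewrite !nthS ?(leq_trans (leq_pred i) ir) //; exact: st_step.
exists r.+1; split.
  by move=> k hk; rewrite /cm; case: ifP => // _; rewrite Mm_out //; lia.
have qr : (i.-1 < r)%N by lia.
have := kost_nat hm (ltnW qr); rewrite (ltn_eqF qr) subr0 => K.
rewrite nthS; last by lia.
rewrite -(@widen_sum (fun k => (cm m i k.+1)%:Z) (r - i.-1)); last 2 first.
- by move=> k hk; rewrite /cm; case: ifP => // _; rewrite Mm_out //; lia.
- by lia.
have -> : \sum_(k < r - i.-1) ((cm m i k.+1)%:Z) = \sum_(h < r - i.-1) (Mm m i.-1 (i.-1 + h.+1))%:Z.
  by apply: eq_bigr => k _; rewrite /cm; case: ifP => //; lia.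
rewrite /st add0n.
have -> : \sum_(t < i.-1) ((cm m t.+1 (i.-1 - t))%:Z) = \sum_(t < i.-1) (Mm m t i.-1)%:Z.
  by apply: eq_bigr => t _; rewrite /cm /= subnKC // ltnW.
by move/eqP: K; rewrite subr_eq => /eqP ->.
Qed.


Unset Implicit Arguments.

Theorem mainTheorem3 (r : nat) (a : seq int) :
  (1 <= r)%N -> (size a <= r.+1)%N ->
  let A := state_of_seq a in
  let B := state_of_seq [:: \sum_(x <- a) x] in
  (* every throw of S gives a positive root eps_i - eps_{i+j} with i+j <= r+1 *)
  (forall S, is_JS A B r S ->
     forall i j, (1 <= i <= r)%N -> (0 < j)%N -> (r.+1 < i + j)%N -> throws S i j = 0%N) /\
  (* the map lands in P_{A_r}(delta) *)
  (forall S, is_JS A B r S -> js_to_roots r S \in kostant_parts (delta r a)) /\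
  (* injective *)
  (forall S S', is_JS A B r S -> is_JS A B r S' ->
     js_to_roots r S = js_to_roots r S' -> S = S') /\
  (* surjective onto P_{A_r}(delta) *)
  (forall m, m \in kostant_parts (delta r a) ->
     exists S, is_JS A B r S /\ js_to_roots r S = m).
Proof.
move=> hr ha A B; split; [|split; [|split]].
- move=> S hJ i j hi hj hij; exact: (claim1 ha hJ hi hj hij).
- move=> S hJ; exact: (fwd_kostant ha hJ).
- move=> S S' hJ hJ' he; exact: (js_inj ha hJ hJ' he).
- move=> m hm; exact: (surj ha hm).
Qed.
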